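(* Every monomorphism $M\colon\mathbf{A}\to\mathbf{B}$ in $\mathbf{Lens}$ is effective: $M$ has a cokernel pair $J_1,J_2\colon\mathbf{B}\to\mathbf{K}$ in $\mathbf{Lens}$, and $M$ is an equaliser of $J_1$ and $J_2$ in $\mathbf{Lens}$.
   Context: A lens $F\colon \mathbf{A}\to\mathbf{B}$ between small categories consists of a functor $F\colon\mathbf{A}\to\mathbf{B}$ (the get functor) together with, for each object $A$ of $\mathbf{A}$, a function $\varphi_{F,A}$ from the set of morphisms of $\mathbf{B}$ with domain $FA$ to the set of morphisms of $\mathbf{A}$ with domain $A$, such that: $F(\varphi_{F,A}b)=b$; $\varphi_{F,A}(\mathrm{id}_{FA})=\mathrm{id}_A$; and $\varphi_{F,A}(b'\circ b)=\varphi_{F,A'}(b')\circ\varphi_{F,A}(b)$ whenever $b$ has domain $FA$, $A'$ is the codomain of $\varphi_{F,A}b$, and $b'$ has domain $FA'$. $\mathbf{Lens}$ is the category of small categories and lenses, with composite of $F\colon\mathbf{A}\to\mathbf{B}$, $G\colon\mathbf{B}\to\mathbf{C}$ having get functor $G\circ F$ and puts $\varphi_{G\circ F,A}(c)=\varphi_{F,A}(\varphi_{G,FA}(c))$. A cokernel pair of $M$ is a pushout of $M$ along itself. *)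

(* Defs.v *)
Set Implicit Arguments.

(** A small category presented by its set of objects and its set of
    morphisms, with domain/codomain maps, identities and a composition
    [cmp g f] (= g ∘ f) which is meaningful when [cod f = dom g]. *)
Record Cat := {
  Ob : Type;
  Arr : Type;
  dom : Arr -> Ob;
  cod : Arr -> Ob;
  idm : Ob -> Arr;
  cmp : Arr -> Arr -> Arr;
  dom_idm : forall a, dom (idm a) = a;
  cod_idm : forall a, cod (idm a) = a;
  dom_cmp : forall f g, cod f = dom g -> dom (cmp g f) = dom f;
  cod_cmp : forall f g, cod f = dom g -> cod (cmp g f) = cod g;
  cmp_idl : forall f, cmp (idm (cod f)) f = f;
  cmp_idr : forall f, cmp f (idm (dom f)) = f;
  cmp_assoc : forall f g h, cod f = dom g -> cod g = dom h ->
      cmp h (cmp g f) = cmp (cmp h g) f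
}.
Arguments dom {c} _.
Arguments cod {c} _.
Arguments idm {c} _.
Arguments cmp {c} _ _.

(** A lens F : A -> B: a get functor plus put functions
    [put a b] = φ_{F,a}(b), meaningful when [dom b = F a]. *)
Record Lens (A B : Cat) := {
  gob : Ob A -> Ob B;
  garr : Arr A -> Arr B;
  garr_dom : forall f, dom (garr f) = gob (dom f);
  garr_cod : forall f, cod (garr f) = gob (cod f);
  garr_idm : forall a, garr (idm a) = idm (gob a);
  garr_cmp : forall f g, cod f = dom g -> garr (cmp g f) = cmp (garr g) (garr f);
  put : Ob A -> Arr B -> Arr A;
  put_dom : forall a b, dom b = gob a -> dom (put a b) = a;
  put_get : forall a b, dom b = gob a -> garr (put a b) = b;
  put_idm : forall a, put a (idm (gob a)) = idm a;
  put_cmp : forall a b b', dom b = gob a -> dom b' = gob (cod (put a b)) ->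
      put a (cmp b' b) = cmp (put (cod (put a b)) b') (put a b)
}.
Arguments gob {A B} _ _.
Arguments garr {A B} _ _.
Arguments put {A B} _ _ _.

Definition lens_eq {A B : Cat} (F G : Lens A B) : Prop :=
  (forall a, gob F a = gob G a) /\
  (forall f, garr F f = garr G f) /\
  (forall a b, dom b = gob F a -> put F a b = put G a b).

Definition lens_id (A : Cat) : Lens A A.
Proof.
  refine {| gob := fun a => a; garr := fun f => f; put := fun _ b => b |};
  intros; auto.
Defined.

Definition lens_comp {A B C : Cat} (G : Lens B C) (F : Lens A B) : Lens A C.
Proof.
  refine {| gob := fun a => gob G (gob F a);
            garr := fun f => garr G (garr F f);
            put := fun a c => put F a (put G (gob F a) c) |}.
  - intro f. rewrite garr_dom, garr_dom. reflexivity.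
  - intro f. rewrite garr_cod, garr_cod. reflexivity.
  - intro a. rewrite garr_idm, garr_idm. reflexivity.
  - intros f g H. rewrite garr_cmp by exact H.
    apply garr_cmp. rewrite garr_cod, garr_dom, H. reflexivity.
  - intros a c H. apply put_dom. apply put_dom. exact H.
  - intros a c H. rewrite put_get. apply put_get. exact H.
    apply put_dom. exact H.
  - intro a. rewrite put_idm. apply put_idm.
  - intros a c c' H H'.
    assert (Hd : dom (put G (gob F a) c) = gob F a) by (apply put_dom; exact H).
    assert (HcF : gob F (cod (put F a (put G (gob F a) c))) =
                  cod (put G (gob F a) c)).
    { rewrite <- garr_cod. rewrite put_get by exact Hd. reflexivity. }
    rewrite HcF in H'.
    rewrite (put_cmp G (gob F a) c c' H H').
    rewrite (put_cmp F a (put G (gob F a) c) (put G (cod (put G (gob F a) c)) c') Hd).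
    + rewrite HcF. reflexivity.
    + rewrite HcF. apply put_dom. exact H'.
Defined.

Definition lens_mono {A B : Cat} (M : Lens A B) : Prop :=
  forall (C : Cat) (X Y : Lens C A),
    lens_eq (lens_comp M X) (lens_comp M Y) -> lens_eq X Y.

Definition is_cokernel_pair {A B K : Cat} (M : Lens A B) (J1 J2 : Lens B K)
  : Prop :=
  lens_eq (lens_comp J1 M) (lens_comp J2 M) /\
  forall (C : Cat) (P1 P2 : Lens B C),
    lens_eq (lens_comp P1 M) (lens_comp P2 M) ->
    exists U : Lens K C,
      lens_eq (lens_comp U J1) P1 /\ lens_eq (lens_comp U J2) P2 /\
      forall U' : Lens K C,
        lens_eq (lens_comp U' J1) P1 -> lens_eq (lens_comp U' J2) P2 ->
        lens_eq U' U.

Definition is_equaliser {A B K : Cat} (M : Lens A B) (J1 J2 : Lens B K)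
  : Prop :=
  lens_eq (lens_comp J1 M) (lens_comp J2 M) /\
  forall (C : Cat) (X : Lens C B),
    lens_eq (lens_comp J1 X) (lens_comp J2 X) ->
    exists U : Lens C A,
      lens_eq (lens_comp M U) X /\
      forall U' : Lens C A, lens_eq (lens_comp M U') X -> lens_eq U' U.

(* Main.v *)
Require Import Defs.
From Stdlib Require Import ClassicalEpsilon ProofIrrelevance Bool.

Lemma sig_eq {T} {P : T -> Prop} (x y : {t | P t}) :
  proj1_sig x = proj1_sig y -> x = y.
Proof. destruct x, y; simpl; intros ->; f_equal; apply proof_irrelevance. Qed.

Section PB.
Variables (A B : Cat) (M : Lens A B).

Definition PBOb := {p : Ob A * Ob A | gob M (fst p) = gob M (snd p)}.
Definition PBArr := {q : Arr A * Arr A | garr M (fst q) = garr M (snd q)}.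

Definition pb_dom (q : PBArr) : PBOb.
Proof.
  refine (exist _ (dom (fst (proj1_sig q)), dom (snd (proj1_sig q))) _).
  simpl; rewrite <- !garr_dom; rewrite (proj2_sig q); reflexivity.
Defined.
Definition pb_cod (q : PBArr) : PBOb.
Proof.
  refine (exist _ (cod (fst (proj1_sig q)), cod (snd (proj1_sig q))) _).
  simpl; rewrite <- !garr_cod; rewrite (proj2_sig q); reflexivity.
Defined.
Definition pb_idm (p : PBOb) : PBArr.
Proof.
  refine (exist _ (idm (fst (proj1_sig p)), idm (snd (proj1_sig p))) _).
  simpl; rewrite !garr_idm, (proj2_sig p); reflexivity.
Defined.

Lemma pb_cmp_pf (g f : PBArr) :
  cod (fst (proj1_sig f)) = dom (fst (proj1_sig g)) /\
  cod (snd (proj1_sig f)) = dom (snd (proj1_sig g)) ->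
  garr M (fst (cmp (fst (proj1_sig g)) (fst (proj1_sig f)),
               cmp (snd (proj1_sig g)) (snd (proj1_sig f)))) =
  garr M (snd (cmp (fst (proj1_sig g)) (fst (proj1_sig f)),
               cmp (snd (proj1_sig g)) (snd (proj1_sig f)))).
Proof.
  intros [H1 H2]; simpl. rewrite !garr_cmp by assumption.
  rewrite (proj2_sig g), (proj2_sig f). reflexivity.
Qed.

Definition pb_cmp (g f : PBArr) : PBArr :=
  match excluded_middle_informative
    (cod (fst (proj1_sig f)) = dom (fst (proj1_sig g)) /\
     cod (snd (proj1_sig f)) = dom (snd (proj1_sig g))) with
  | left H => exist _ _ (pb_cmp_pf g f H)
  | right _ => f
  end.

Lemma pb_cmp_eq g f :
  cod (fst (proj1_sig f)) = dom (fst (proj1_sig g)) ->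
  cod (snd (proj1_sig f)) = dom (snd (proj1_sig g)) ->
  proj1_sig (pb_cmp g f) = (cmp (fst (proj1_sig g)) (fst (proj1_sig f)),
               cmp (snd (proj1_sig g)) (snd (proj1_sig f))).
Proof.
  intros H1 H2; unfold pb_cmp; destruct excluded_middle_informative;
  [reflexivity | tauto].
Qed.

Lemma pb_cond f g : pb_cod f = pb_dom g ->
  cod (fst (proj1_sig f)) = dom (fst (proj1_sig g)) /\
  cod (snd (proj1_sig f)) = dom (snd (proj1_sig g)).
Proof.
  intro H; apply (f_equal (@proj1_sig _ _)) in H; simpl in H.
  injection H; auto.
Qed.

Definition PB : Cat.
Proof.
  refine (@Build_Cat PBOb PBArr pb_dom pb_cod pb_idm pb_cmp _ _ _ _ _ _ _).
  - intro a; apply sig_eq; simpl; rewrite !dom_idm; destruct a as [[x y] ?]; reflexivity.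
  - intro a; apply sig_eq; simpl; rewrite !cod_idm; destruct a as [[x y] ?]; reflexivity.
  - intros f g H; destruct (pb_cond _ _ H) as [H1 H2]; apply sig_eq; simpl.
    rewrite pb_cmp_eq by assumption; simpl; rewrite !dom_cmp by assumption; reflexivity.
  - intros f g H; destruct (pb_cond _ _ H) as [H1 H2]; apply sig_eq; simpl.
    rewrite pb_cmp_eq by assumption; simpl; rewrite !cod_cmp by assumption; reflexivity.
  - intro f; apply sig_eq; rewrite pb_cmp_eq; simpl; rewrite ?dom_idm, ?cmp_idl; try reflexivity.
    destruct f as [[x y] ?]; reflexivity.
  - intro f; apply sig_eq; rewrite pb_cmp_eq; simpl; rewrite ?cod_idm, ?cmp_idr; try reflexivity.
    destruct f as [[x y] ?]; reflexivity.
  - intros f g h H H'; destruct (pb_cond _ _ H) as [H1 H2]; destruct (pb_cond _ _ H') as [H3 H4].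
    apply sig_eq.
    rewrite pb_cmp_eq; [| rewrite pb_cmp_eq by assumption; simpl; rewrite cod_cmp by assumption; assumption
                       | rewrite pb_cmp_eq by assumption; simpl; rewrite cod_cmp by assumption; assumption].
    rewrite (pb_cmp_eq (pb_cmp h g) f); [| rewrite pb_cmp_eq by assumption; simpl; rewrite dom_cmp by assumption; assumption
                       | rewrite pb_cmp_eq by assumption; simpl; rewrite dom_cmp by assumption; assumption].
    rewrite !pb_cmp_eq by assumption; simpl.
    rewrite !cmp_assoc by assumption. reflexivity.
Defined.

Definition p1 (p : PBOb) := fst (proj1_sig p).
Definition p2 (p : PBOb) := snd (proj1_sig p).

Lemma pi1_pf (p : PBOb) b : dom b = p1 p ->
  garr M (fst (b, put M (p2 p) (garr M b))) = garr M (snd (b, put M (p2 p) (garr M b))).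
Proof.
  intro H; simpl; symmetry; apply put_get; rewrite garr_dom, H; exact (proj2_sig p).
Qed.
Lemma pi2_pf (p : PBOb) b : dom b = p2 p ->
  garr M (fst (put M (p1 p) (garr M b), b)) = garr M (snd (put M (p1 p) (garr M b), b)).
Proof.
  intro H; simpl; apply put_get; rewrite garr_dom, H; symmetry; exact (proj2_sig p).
Qed.

Definition pi1_put (p : PBOb) (b : Arr A) : PBArr :=
  match excluded_middle_informative (dom b = p1 p) with
  | left H => exist _ _ (pi1_pf p b H)
  | right _ => pb_idm p end.
Definition pi2_put (p : PBOb) (b : Arr A) : PBArr :=
  match excluded_middle_informative (dom b = p2 p) with
  | left H => exist _ _ (pi2_pf p b H)
  | right _ => pb_idm p end.

Lemma pi1_put_eq p b : dom b = p1 p ->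
  proj1_sig (pi1_put p b) = (b, put M (p2 p) (garr M b)).
Proof. intro H; unfold pi1_put; destruct excluded_middle_informative; [reflexivity|tauto]. Qed.
Lemma pi2_put_eq p b : dom b = p2 p ->
  proj1_sig (pi2_put p b) = (put M (p1 p) (garr M b), b).
Proof. intro H; unfold pi2_put; destruct excluded_middle_informative; [reflexivity|tauto]. Qed.

Lemma pb_cod_snd q : p2 (pb_cod q) = cod (snd (proj1_sig q)).
Proof. reflexivity. Qed.
Lemma pb_cod_fst q : p1 (pb_cod q) = cod (fst (proj1_sig q)).
Proof. reflexivity. Qed.

Definition pi1 : Lens PB A.
Proof.
  refine (@Build_Lens PB A p1 (fun q => fst (proj1_sig q)) _ _ _ _ pi1_put _ _ _ _).
  - intro f; reflexivity.
  - intro f; reflexivity.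
  - intro a; reflexivity.
  - intros f g H; simpl in *; destruct (pb_cond _ _ H).
    rewrite pb_cmp_eq by assumption; reflexivity.
  - intros a b H; simpl in *; apply sig_eq; simpl.
    rewrite pi1_put_eq by assumption; simpl. rewrite put_dom, H.
    + destruct a as [[x y] ?]; reflexivity.
    + rewrite garr_dom, H; exact (proj2_sig a).
  - intros a b H; simpl in *; rewrite pi1_put_eq by assumption; reflexivity.
  - intros a; apply sig_eq; rewrite pi1_put_eq by (simpl; apply dom_idm).
    simpl. rewrite garr_idm. unfold p1 at 2. rewrite (proj2_sig a). rewrite put_idm.
    destruct a as [[x y] ?]; reflexivity.
  - intros a b b' H H'; simpl in *.
    assert (Hc : p1 (pb_cod (pi1_put a b)) = cod b)
      by (rewrite pb_cod_fst, pi1_put_eq by assumption; reflexivity).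
    rewrite Hc in H'.
    assert (Hd : dom (garr M b) = gob M (p2 a))
      by (rewrite garr_dom, H; exact (proj2_sig a)).
    apply sig_eq; rewrite pi1_put_eq by (rewrite dom_cmp by (symmetry; exact H'); exact H).
    rewrite pb_cmp_eq.
    + rewrite (pi1_put_eq (pb_cod (pi1_put a b)) b') by (rewrite Hc; exact H'). rewrite (pi1_put_eq a b H). simpl.
      rewrite garr_cmp by (symmetry; exact H').
      rewrite put_cmp; [ | exact Hd | ].
      * rewrite pb_cod_snd, pi1_put_eq by exact H; reflexivity.
      * rewrite garr_dom, H', <- (garr_cod M (put _ _ _)), put_get by exact Hd; symmetry; apply garr_cod.
    + rewrite (pi1_put_eq (pb_cod (pi1_put a b)) b') by (rewrite Hc; exact H'). rewrite (pi1_put_eq a b H). simpl.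
      symmetry; exact H'.
    + rewrite (pi1_put_eq (pb_cod (pi1_put a b)) b') by (rewrite Hc; exact H'). rewrite (pi1_put_eq a b H). simpl.
      rewrite pb_cod_snd, pi1_put_eq by exact H; simpl. symmetry; apply put_dom.
      rewrite garr_dom, H', <- (garr_cod M (put _ _ _)), put_get by exact Hd; symmetry; apply garr_cod.
Defined.

Definition pi2 : Lens PB A.
Proof.
  refine (@Build_Lens PB A p2 (fun q => snd (proj1_sig q)) _ _ _ _ pi2_put _ _ _ _).
  - intro f; reflexivity.
  - intro f; reflexivity.
  - intro a; reflexivity.
  - intros f g H; simpl in *; destruct (pb_cond _ _ H).
    rewrite pb_cmp_eq by assumption; reflexivity.
  - intros a b H; simpl in *; apply sig_eq; simpl.
    rewrite pi2_put_eq by assumption; simpl. rewrite put_dom, H.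
    + destruct a as [[x y] ?]; reflexivity.
    + rewrite garr_dom, H; symmetry; exact (proj2_sig a).
  - intros a b H; simpl in *; rewrite pi2_put_eq by assumption; reflexivity.
  - intros a; apply sig_eq; rewrite pi2_put_eq by (simpl; apply dom_idm).
    simpl. rewrite garr_idm. rewrite <- (proj2_sig a : gob M (p1 a) = gob M (p2 a)). rewrite put_idm.
    destruct a as [[x y] ?]; reflexivity.
  - intros a b b' H H'; simpl in *.
    assert (Hc : p2 (pb_cod (pi2_put a b)) = cod b)
      by (rewrite pb_cod_snd, pi2_put_eq by assumption; reflexivity).
    rewrite Hc in H'.
    assert (Hd : dom (garr M b) = gob M (p1 a))
      by (rewrite garr_dom, H; symmetry; exact (proj2_sig a)).
    apply sig_eq; rewrite pi2_put_eq by (rewrite dom_cmp by (symmetry; exact H'); exact H).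
    rewrite pb_cmp_eq.
    + rewrite (pi2_put_eq (pb_cod (pi2_put a b)) b') by (rewrite Hc; exact H'). rewrite (pi2_put_eq a b H). simpl.
      rewrite garr_cmp by (symmetry; exact H').
      rewrite put_cmp; [ | exact Hd | ].
      * rewrite pb_cod_fst, pi2_put_eq by exact H; reflexivity.
      * rewrite garr_dom, H', <- (garr_cod M (put _ _ _)), put_get by exact Hd; symmetry; apply garr_cod.
    + rewrite (pi2_put_eq (pb_cod (pi2_put a b)) b') by (rewrite Hc; exact H'). rewrite (pi2_put_eq a b H). simpl.
      rewrite pb_cod_fst, pi2_put_eq by exact H; simpl. symmetry; apply put_dom.
      rewrite garr_dom, H', <- (garr_cod M (put _ _ _)), put_get by exact Hd; symmetry; apply garr_cod.
    + rewrite (pi2_put_eq (pb_cod (pi2_put a b)) b') by (rewrite Hc; exact H'). rewrite (pi2_put_eq a b H). simpl.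
      symmetry; exact H'.
Defined.

Lemma pi_eq : lens_eq (lens_comp M pi1) (lens_comp M pi2).
Proof.
  split; [|split].
  - intro a; exact (proj2_sig a).
  - intro f; exact (proj2_sig f).
  - intros a b H; simpl in *. apply sig_eq.
    assert (H2 : dom b = gob M (p2 a)) by (rewrite H; exact (proj2_sig a)).
    rewrite pi1_put_eq by (apply put_dom; exact H).
    rewrite pi2_put_eq by (apply put_dom; exact H2).
    rewrite !put_get by assumption. reflexivity.
Qed.

Hypothesis Hmono : lens_mono M.

Lemma mono_ob a1 a2 : gob M a1 = gob M a2 -> a1 = a2.
Proof.
  intro H. destruct (Hmono _ _ _ pi_eq) as [Ho _].
  exact (Ho (exist _ (a1, a2) H)).
Qed.

Lemma mono_arr f1 f2 : garr M f1 = garr M f2 -> f1 = f2.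
Proof.
  intro H. destruct (Hmono _ _ _ pi_eq) as [_ [Ha _]].
  exact (Ha (exist _ (f1, f2) H)).
Qed.

Lemma mono_putget a f : dom f = a -> put M a (garr M f) = f.
Proof.
  intro H; apply mono_arr; apply put_get; rewrite garr_dom, H; reflexivity.
Qed.
End PB.
Lemma orb_abs t b : (b = true -> t = true) -> t || b = t.
Proof. destruct b, t; simpl; intuition. Qed.

Section KS.
Variables (A B : Cat) (M : Lens A B).

Definition inA (b : Ob B) : bool :=
  if excluded_middle_informative (exists a, gob M a = b) then true else false.

Lemma inA_M a : inA (gob M a) = true.
Proof. unfold inA; destruct excluded_middle_informative as [_|n]; [reflexivity|]. exfalso; eauto. Qed.
Lemma inA_ex b : inA b = true -> exists a, gob M a = b.
Proof. unfold inA; destruct excluded_middle_informative; [auto|discriminate]. Qed.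
Lemma inA_cod g : inA (dom g) = true -> inA (cod g) = true.
Proof.
  intro H; destruct (inA_ex _ H) as [a Ha].
  assert (Hd : dom g = gob M a) by auto.
  rewrite <- (put_get M a g Hd), garr_cod. apply inA_M.
Qed.

Definition KOb := {p : Ob B * bool | inA (fst p) = true -> snd p = true}.
Definition KArr := {q : Arr B * bool | inA (dom (fst q)) = true -> snd q = true}.

Definition k_dom (q : KArr) : KOb := exist _ (dom (fst (proj1_sig q)), snd (proj1_sig q)) (proj2_sig q).
Definition k_cod (q : KArr) : KOb.
Proof.
  refine (exist _ (cod (fst (proj1_sig q)), snd (proj1_sig q) || inA (cod (fst (proj1_sig q)))) _).
  simpl; intro H; rewrite H; apply orb_true_r.
Defined.
Definition k_idm (p : KOb) : KArr.
Proof.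
  refine (exist _ (idm (fst (proj1_sig p)), snd (proj1_sig p)) _).
  simpl; rewrite dom_idm; exact (proj2_sig p).
Defined.
Definition k_cmp (g f : KArr) : KArr.
Proof.
  refine (exist _ (cmp (fst (proj1_sig g)) (fst (proj1_sig f)),
     snd (proj1_sig f) || inA (dom (cmp (fst (proj1_sig g)) (fst (proj1_sig f))))) _).
  simpl; intro H; rewrite H; apply orb_true_r.
Defined.

Lemma k_cond f g : k_cod f = k_dom g ->
  cod (fst (proj1_sig f)) = dom (fst (proj1_sig g)) /\
  snd (proj1_sig f) || inA (cod (fst (proj1_sig f))) = snd (proj1_sig g).
Proof.
  intro H; apply (f_equal (@proj1_sig _ _)) in H; simpl in H.
  injection H; auto.
Qed.

Definition K : Cat.
Proof.
  refine (@Build_Cat KOb KArr k_dom k_cod k_idm k_cmp _ _ _ _ _ _ _).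
  - intro a; apply sig_eq; simpl; rewrite dom_idm; destruct a as [[x y] ?]; reflexivity.
  - intro a; apply sig_eq; simpl; rewrite cod_idm; destruct a as [[x y] p]; simpl in *.
    rewrite orb_abs by exact p; reflexivity.
  - intros f g H; destruct (k_cond _ _ H) as [H1 H2]; apply sig_eq; simpl.
    rewrite dom_cmp by assumption. rewrite orb_abs by exact (proj2_sig f). reflexivity.
  - intros f g H; destruct (k_cond _ _ H) as [H1 H2]; apply sig_eq; simpl.
    rewrite dom_cmp, cod_cmp by assumption. rewrite <- H2.
    pose proof (proj2_sig f) as Pf; simpl in Pf.
    assert (Cl : inA (cod (fst (proj1_sig f))) = true -> inA (cod (fst (proj1_sig g))) = true)
      by (rewrite H1; apply inA_cod).
    revert Pf Cl.
    destruct (inA (dom (fst (proj1_sig f)))), (inA (cod (fst (proj1_sig f)))),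
       (inA (cod (fst (proj1_sig g)))), (snd (proj1_sig f)); simpl; intuition congruence.
  - intro f; apply sig_eq; simpl. rewrite cmp_idl.
    rewrite orb_abs by exact (proj2_sig f). destruct f as [[x y] ?]; reflexivity.
  - intro f; apply sig_eq; simpl. rewrite cmp_idr.
    rewrite orb_abs by exact (proj2_sig f). destruct f as [[x y] ?]; reflexivity.
  - intros f g h H H'; destruct (k_cond _ _ H) as [H1 H2]; destruct (k_cond _ _ H') as [H3 H4].
    apply sig_eq; simpl.
    rewrite cmp_assoc by assumption.
    assert (E: dom (cmp (cmp (fst (proj1_sig h)) (fst (proj1_sig g))) (fst (proj1_sig f))) = dom (fst (proj1_sig f)))
      by (apply dom_cmp; rewrite dom_cmp by assumption; assumption).
    rewrite E, dom_cmp by exact H1.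
    rewrite !(orb_abs (snd (proj1_sig f)) _ (proj2_sig f)). reflexivity.
Defined.

Lemma J_ob_pf t b : inA (fst (b, t || inA b)) = true -> snd (b, t || inA b) = true.
Proof. simpl; intro H; rewrite H; apply orb_true_r. Qed.
Lemma J_arr_pf t g : inA (dom (fst (g, t || inA (dom g)))) = true -> snd (g, t || inA (dom g)) = true.
Proof. simpl; intro H; rewrite H; apply orb_true_r. Qed.
Definition Jgob t b : KOb := exist _ _ (J_ob_pf t b).
Definition Jgarr t g : KArr := exist _ _ (J_arr_pf t g).

Definition J (t : bool) : Lens B K.
Proof.
  refine (@Build_Lens B K (Jgob t) (Jgarr t) _ _ _ _
    (fun b k => fst (proj1_sig k)) _ _ _ _).
  - intro f; apply sig_eq; reflexivity.
  - intro g; apply sig_eq; simpl. f_equal.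
    generalize (inA_cod g); destruct (inA (dom g)), (inA (cod g)), t; simpl; intuition congruence.
  - intro b; apply sig_eq; simpl; rewrite dom_idm; reflexivity.
  - intros f g H1; apply sig_eq; simpl.
    rewrite dom_cmp by exact H1. rewrite <- orb_assoc, orb_diag; reflexivity.
  - intros b k H; apply (f_equal (@proj1_sig _ _)) in H; simpl in H; injection H; auto.
  - intros b k H; apply (f_equal (@proj1_sig _ _)) in H; simpl in H; injection H; intros E1 E2.
    apply sig_eq; destruct k as [[k1 k2] pk]; simpl in *. rewrite E2, E1; reflexivity.
  - intros; reflexivity.
  - intros; reflexivity.
Defined.

Lemma J_gob_sig t b : proj1_sig (gob (J t) b) = (b, t || inA b).
Proof. reflexivity. Qed.

Lemma JM_eq : lens_eq (lens_comp (J true) M) (lens_comp (J false) M).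
Proof.
  split; [|split].
  - intro a; apply sig_eq; simpl; rewrite inA_M; reflexivity.
  - intro f; apply sig_eq; simpl; rewrite garr_dom, inA_M; reflexivity.
  - intros; reflexivity.
Qed.

Lemma J_surj_ob (k : KOb) : exists t b, k = gob (J t) b.
Proof.
  exists (snd (proj1_sig k)), (fst (proj1_sig k)); apply sig_eq; simpl.
  rewrite orb_abs by exact (proj2_sig k). destruct k as [[x y] ?]; reflexivity.
Qed.
Lemma J_surj_arr (q : KArr) : exists t g, q = garr (J t) g.
Proof.
  exists (snd (proj1_sig q)), (fst (proj1_sig q)); apply sig_eq; simpl.
  rewrite orb_abs by exact (proj2_sig q). destruct q as [[x y] ?]; reflexivity.
Qed.
Lemma J_ob_eq (k : KOb) : gob (J (snd (proj1_sig k))) (fst (proj1_sig k)) = k.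
Proof.
  apply sig_eq; simpl.
  rewrite orb_abs by exact (proj2_sig k). destruct k as [[x y] ?]; reflexivity.
Qed.

Section Cok.
Variables (C : Cat) (P1 P2 : Lens B C).
Hypothesis HP : lens_eq (lens_comp P1 M) (lens_comp P2 M).
Definition P (t : bool) := if t then P1 else P2.

Lemma agree_ob b : inA b = true -> gob P1 b = gob P2 b.
Proof. intro H; destruct (inA_ex _ H) as [a <-]. exact (proj1 HP a). Qed.
Lemma agree_arr g : inA (dom g) = true -> garr P1 g = garr P2 g.
Proof.
  intro H; destruct (inA_ex _ H) as [a Ha].
  rewrite <- (put_get M a g) by auto. exact (proj1 (proj2 HP) _).
Qed.
Lemma agree_put b c : inA b = true -> dom c = gob P1 b -> put P1 b c = put P2 b c.
Proof.
  intros H Hc; destruct (inA_ex _ H) as [a <-].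
  pose proof (proj2 (proj2 HP) a c Hc) as E; simpl in E.
  rewrite <- (put_get M a (put P1 (gob M a) c)) by (apply put_dom; exact Hc).
  rewrite E. apply put_get. apply put_dom. rewrite Hc. apply agree_ob, inA_M.
Qed.
Lemma Pob t b : gob (P (t || inA b)) b = gob (P t) b.
Proof.
  destruct t; simpl; [reflexivity|]. destruct (inA b) eqn:E; simpl; [|reflexivity].
  apply agree_ob; exact E.
Qed.
Lemma Parr t g : garr (P (t || inA (dom g))) g = garr (P t) g.
Proof.
  destruct t; simpl; [reflexivity|]. destruct (inA (dom g)) eqn:E; simpl; [|reflexivity].
  apply agree_arr; exact E.
Qed.
Lemma Pput t b c : dom c = gob (P t) b -> put (P (t || inA b)) b c = put (P t) b c.
Proof.
  destruct t; simpl; [reflexivity|]. intro Hc. destruct (inA b) eqn:E; simpl; [|reflexivity].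
  apply agree_put; [exact E|]. rewrite Hc; symmetry; apply agree_ob; exact E.
Qed.
Lemma PputJ t b c : dom c = gob (P t) b ->
  garr (J (t || inA b)) (put (P (t || inA b)) b c) = garr (J t) (put (P t) b c).
Proof.
  intro Hc; rewrite Pput by exact Hc. apply sig_eq; simpl.
  rewrite put_dom by exact Hc. rewrite <- orb_assoc, orb_diag; reflexivity.
Qed.

Definition UU : Lens K C.
Proof.
  refine (@Build_Lens K C
    (fun k => gob (P (snd (proj1_sig k))) (fst (proj1_sig k)))
    (fun q => garr (P (snd (proj1_sig q))) (fst (proj1_sig q))) _ _ _ _
    (fun k c => garr (J (snd (proj1_sig k))) (put (P (snd (proj1_sig k))) (fst (proj1_sig k)) c))
    _ _ _ _).
  - intro q; simpl; apply garr_dom.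
  - intro q; simpl; rewrite garr_cod; symmetry; apply Pob.
  - intro k; simpl; apply garr_idm.
  - intros f g H; destruct (k_cond _ _ H) as [H1 H2]; simpl.
    rewrite dom_cmp by exact H1. rewrite (orb_abs _ _ (proj2_sig f)).
    rewrite garr_cmp by exact H1. rewrite <- H2, H1, Parr. reflexivity.
  - intros k c H. rewrite (garr_dom (J _)), put_dom by exact H. apply J_ob_eq.
  - intros k c H. simpl. rewrite Parr. apply put_get; exact H.
  - intros k. rewrite put_idm, garr_idm. rewrite J_ob_eq; reflexivity.
  - intros k c c' H H'.
    set (x := put (P (snd (proj1_sig k))) (fst (proj1_sig k)) c).
    assert (Hx : dom x = fst (proj1_sig k)) by (apply put_dom; exact H).
    rewrite (garr_cod (J _)) in H' |- *. simpl in H'. rewrite Pob in H'.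
    rewrite J_gob_sig; simpl fst; simpl snd. rewrite PputJ by exact H'.
    rewrite put_cmp by assumption. fold x.
    apply garr_cmp. symmetry; apply put_dom; exact H'.
Defined.

Lemma UU_J1 : lens_eq (lens_comp UU (J true)) P1.
Proof. split; [|split]; intros; reflexivity. Qed.
Lemma UU_J2 : lens_eq (lens_comp UU (J false)) P2.
Proof.
  split; [|split].
  - intro b; exact (Pob false b).
  - intro g; exact (Parr false g).
  - intros b c H; simpl in H |- *. apply (Pput false b c). rewrite H; exact (Pob false b).
Qed.

Lemma UU_unique (U' : Lens K C) :
  lens_eq (lens_comp U' (J true)) P1 -> lens_eq (lens_comp U' (J false)) P2 ->
  lens_eq U' UU.
Proof.
  intros E1 E2.
  assert (EJ : forall t, lens_eq (lens_comp U' (J t)) (P t)) by (intros []; assumption).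
  split; [|split].
  - intro k; destruct (J_surj_ob k) as [t [b ->]].
    transitivity (gob (P t) b); [exact (proj1 (EJ t) b)|]. symmetry. exact (Pob t b).
  - intro q; destruct (J_surj_arr q) as [t [g ->]].
    transitivity (garr (P t) g); [exact (proj1 (proj2 (EJ t)) g)|]. symmetry. exact (Parr t g).
  - intros k c H; destruct (J_surj_ob k) as [t [b ->]].
    assert (Hc : dom c = gob (P t) b) by (rewrite H; exact (proj1 (EJ t) b)).
    pose proof (proj2 (proj2 (EJ t)) b c H) as Ep; simpl in Ep.
    pose proof (put_dom U' _ _ H) as Ed.
    change (put U' (gob (J t) b) c = garr (J (t || inA b)) (put (P (t || inA b)) b c)).
    rewrite PputJ by exact Hc.
    apply sig_eq.
    change (Jgob t b) with (gob (J t) b) in Ep.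
    pose proof (f_equal (fun k => snd (proj1_sig k)) Ed) as Ed2.
    change (snd (proj1_sig (put U' (gob (J t) b) c)) = t || inA b) in Ed2.
    destruct (proj1_sig (put U' (gob (J t) b) c)) as [y1 y2].
    simpl in Ep, Ed2 |- *. rewrite Ep, Ed2. rewrite put_dom by exact Hc. reflexivity.
Qed.
End Cok.

Lemma cokernel : is_cokernel_pair M (J true) (J false).
Proof.
  split; [exact JM_eq|].
  intros C P1 P2 HP. exists (UU _ _ _ HP).
  split; [apply UU_J1|split; [apply UU_J2|]].
  intros U' E1 E2; apply UU_unique; assumption.
Qed.

Section Eq.
Hypothesis inj : forall a1 a2, gob M a1 = gob M a2 -> a1 = a2.
Hypothesis pg : forall a f, dom f = a -> put M a (garr M f) = f.
Variables (C : Cat) (X : Lens C B).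
Hypothesis ex : forall c, exists a, gob M a = gob X c.

Definition sel (c : Ob C) : Ob A := proj1_sig (constructive_indefinite_description _ (ex c)).
Lemma sel_spec c : gob M (sel c) = gob X c.
Proof. unfold sel; destruct constructive_indefinite_description; assumption. Qed.

Lemma selX f : dom (garr X f) = gob M (sel (dom f)).
Proof. rewrite garr_dom, sel_spec; reflexivity. Qed.

Definition VV : Lens C A.
Proof.
  refine (@Build_Lens C A sel (fun f => put M (sel (dom f)) (garr X f)) _ _ _ _
    (fun c a' => put X c (garr M a')) _ _ _ _).
  - intro f; apply put_dom, selX.
  - intro f; apply inj. rewrite <- garr_cod, put_get by apply selX.
    rewrite garr_cod, sel_spec; reflexivity.
  - intro a; rewrite garr_idm, dom_idm, <- sel_spec, put_idm; reflexivity.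
  - intros f g H. rewrite garr_cmp by exact H. rewrite dom_cmp by exact H.
    rewrite put_cmp; [| apply selX |].
    + f_equal. f_equal. apply inj. rewrite <- garr_cod, put_get by apply selX.
      rewrite garr_cod, sel_spec, H; reflexivity.
    + rewrite <- (garr_cod M (put _ _ _)), put_get by apply selX. rewrite garr_dom, garr_cod, H; reflexivity.
  - intros c a' H. apply put_dom. rewrite garr_dom, H, sel_spec; reflexivity.
  - intros c a' H. rewrite put_dom by (rewrite garr_dom, H, sel_spec; reflexivity).
    rewrite put_get by (rewrite garr_dom, H, sel_spec; reflexivity).
    apply pg; exact H.
  - intro c; rewrite garr_idm, sel_spec; apply put_idm.
  - intros c a a' H H'.
    assert (Hd : dom (garr M a) = gob X c) by (rewrite garr_dom, H, sel_spec; reflexivity).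
    assert (Hca : cod a = dom a').
    { rewrite H'. apply inj. rewrite <- garr_cod, sel_spec.
      rewrite <- (put_get X c (garr M a) Hd) at 1. apply garr_cod. }
    rewrite garr_cmp by exact Hca. apply put_cmp; [exact Hd|].
    rewrite garr_dom, H', sel_spec; reflexivity.
Defined.

Lemma VV_fac : lens_eq (lens_comp M VV) X.
Proof.
  split; [|split].
  - intro c; apply sel_spec.
  - intro f; simpl; apply put_get, selX.
  - intros c b H; simpl in *. rewrite put_get by exact H. reflexivity.
Qed.

Lemma VV_unique (U' : Lens C A) : lens_eq (lens_comp M U') X -> lens_eq U' VV.
Proof.
  intros [Eo [Ea Ep]].
  assert (Eob : forall c, gob U' c = sel c)
    by (intro c; apply inj; rewrite sel_spec; apply Eo).
  split; [exact Eob|split].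
  - intro f; simpl. rewrite <- (pg (sel (dom f)) (garr U' f)).
    + f_equal. apply Ea.
    + rewrite garr_dom; apply Eob.
  - intros c a' H; simpl.
    rewrite <- (pg (gob U' c) a' H) at 1.
    rewrite <- (Ep c (garr M a')) by (rewrite garr_dom, H; reflexivity). reflexivity.
Qed.
End Eq.
End KS.

Theorem proposition5p7 :
  forall (A B : Cat) (M : Lens A B),
    lens_mono M ->
    exists (K : Cat) (J1 J2 : Lens B K),
      is_cokernel_pair M J1 J2 /\ is_equaliser M J1 J2.
Proof.
  intros A B M Hm.
  exists (K _ _ M), (J _ _ M true), (J _ _ M false).
  split; [apply cokernel|].
  split; [apply JM_eq|].
  intros C X HX.
  assert (ex : forall c, exists a, gob M a = gob X c).
  { intro c. pose proof (f_equal (fun k => snd (proj1_sig k)) (proj1 HX c)) as E.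
    simpl in E. apply inA_ex. symmetry; exact E. }
  exists (VV _ _ M (mono_ob _ _ M Hm) (mono_putget _ _ M Hm) _ X ex).
  split; [apply VV_fac|].
  intros U' E; apply VV_unique; exact E.
Qed.
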